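(* Let $u\in C^4(\mathbb{R}^3)$ be a $2$-convex solution of $\sigma_2(D^2u)=1$ in $\mathbb{R}^3$. Then at every point, $$\sum_{i,j=1}^3\sigma_2^{ij}\,(\log\Delta u)_{ij}\ \ge\ \frac{1}{25}\sum_{i,j=1}^3\sigma_2^{ij}\,(\log\Delta u)_i\,(\log\Delta u)_j.$$
   Context: $\sigma_2(D^2u)$ is the second elementary symmetric function of the eigenvalues of $D^2u$, and $\sigma_2^{ij}=\partial\sigma_2/\partial u_{ij}$ evaluated at $D^2u$ (so $\sigma_2^{ij}=\Delta u\,\delta_{ij}-u_{ij}$). A function is $2$-convex if the eigenvalues $\lambda$ of its Hessian satisfy $\sigma_1(\lambda)>0$, $\sigma_2(\lambda)>0$ at every point; in particular $\Delta u=\sigma_1(D^2u)>0$. Subscripts denote partial derivatives. *)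

(* Defs.v *)
From Stdlib Require Import Reals Lra ClassicalEpsilon.
Open Scope R_scope.

Definition R3 : Type := (R * R * R)%type.

Definition coord (x : R3) (i : nat) : R :=
  match x with (a, b, c) =>
    match i with 0%nat => a | 1%nat => b | _ => c end end.

Definition shift (x : R3) (i : nat) (t : R) : R3 :=
  match x with (a, b, c) =>
    match i with
    | 0%nat => (a + t, b, c)
    | 1%nat => (a, b + t, c)
    | 2%nat => (a, b, c + t)
    | _ => (a, b, c)
    end end.

Definition has_partial (f : R3 -> R) (i : nat) (x : R3) (l : R) : Prop :=
  derivable_pt_lim (fun t => f (shift x i t)) 0 l.

(* the partial derivative f_i (the unique limit when it exists; junk otherwise) *)
Definition pd (i : nat) (f : R3 -> R) (x : R3) : R :=
  epsilon (inhabits 0) (fun l => has_partial f i x l).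

Definition dist3 (x y : R3) : R :=
  Rmax (Rabs (coord x 0 - coord y 0))
       (Rmax (Rabs (coord x 1 - coord y 1)) (Rabs (coord x 2 - coord y 2))).

Definition cont3 (f : R3 -> R) : Prop :=
  forall x eps, 0 < eps -> exists delta, 0 < delta /\
    forall y, dist3 y x < delta -> Rabs (f y - f x) < eps.

Fixpoint Ck (k : nat) (f : R3 -> R) : Prop :=
  match k with
  | 0%nat => cont3 f
  | S k' => cont3 f /\
      forall i, (i < 3)%nat ->
        (forall x, exists l, has_partial f i x l) /\ Ck k' (pd i f)
  end.

Definition sum3 (g : nat -> R) : R := g 0%nat + g 1%nat + g 2%nat.

Definition hess (u : R3 -> R) (x : R3) (i j : nat) : R := pd i (pd j u) x.

Definition lap (u : R3 -> R) (x : R3) : R := sum3 (fun i => hess u x i i).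

(* sigma_2(D^2 u) = sum of the principal 2x2 minors of the Hessian
   (= second elementary symmetric function of its eigenvalues). *)
Definition sigma2 (u : R3 -> R) (x : R3) : R :=
  let h := hess u x in
  (h 0%nat 0%nat * h 1%nat 1%nat - h 0%nat 1%nat * h 1%nat 0%nat) +
  (h 0%nat 0%nat * h 2%nat 2%nat - h 0%nat 2%nat * h 2%nat 0%nat) +
  (h 1%nat 1%nat * h 2%nat 2%nat - h 1%nat 2%nat * h 2%nat 1%nat).

Definition kron (i j : nat) : R := if Nat.eqb i j then 1 else 0.

Definition sigma2_ij (u : R3 -> R) (x : R3) (i j : nat) : R :=
  lap u x * kron i j - hess u x i j.

Definition two_convex (u : R3 -> R) : Prop :=
  forall x, 0 < lap u x /\ 0 < sigma2 u x.

(* Main.v *)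
Require Import Defs.
From Stdlib Require Import Reals Lra Psatz Nsatz Lia FunctionalExtensionality ClassicalEpsilon.
Open Scope R_scope.

Lemma sqrt_sq2 (x : R) : 0 <= x -> sqrt x ^ 2 = x.
Proof. intros h. simpl. rewrite Rmult_1_r. apply sqrt_sqrt. exact h. Qed.

Ltac posi := repeat first [ apply Rplus_le_le_0_compat | apply Rmult_le_pos | apply pow_le | lra ].

Lemma diag_ravi (x y z a1 a2 a3 : R) : 0 < x -> 0 < y -> 0 < z ->
  let s1 := (y+z)^2 in let s2 := (x+z)^2 in let s3 := (x+y)^2 in
  s1*a1+s2*a2+s3*a3 = 0 ->
  (s1+s2+s3)/2 * (a1^2+3*a2^2+3*a3^2-(a1+a2+a3)^2) >= 26/25 * s1 * (a1+a2+a3)^2.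
Proof.
  intros hx hy hz s1 s2 s3 hc.
  set (S := s1+s2+s3).
  set (A := S*(s1+s2) - 26/25*(s1-s2)^2).
  set (C := S*(s1+s3) - 26/25*(s1-s3)^2).
  set (B := S*(s2+s3-s1) - 2*(26/25)*(s1-s2)*(s1-s3)).
  assert (hA : A = 4*z^4 + 8*y^1*z^3 + (146/25)*y^2*z^2 + (46/25)*y^3*z^1 + (24/25)*y^4 + 8*x^1*z^3 + (508/25)*x^1*y^1*z^2 + (354/25)*x^1*y^2*z^1 + 2*x^1*y^3 + (146/25)*x^2*z^2 + (354/25)*x^2*y^1*z^1 + (152/25)*x^2*y^2 + (46/25)*x^3*z^1 + 2*x^3*y^1 + (24/25)*x^4) by (unfold A, S, s1, s2, s3; field).
  assert (hD : 4*A*C - B^2 = (384/25)*z^8 + (1504/25)*y^1*z^7 + (2704/25)*y^2*z^6 + (3248/25)*y^3*z^5 + (3328/25)*y^4*z^4 + (3248/25)*y^5*z^3 + (2704/25)*y^6*z^2 + (1504/25)*y^7*z^1 + (384/25)*y^8 + (1568/25)*x^1*z^7 + (14016/25)*x^1*y^1*z^6 + (41296/25)*x^1*y^2*z^5 + (66384/25)*x^1*y^3*z^4 + (66384/25)*x^1*y^4*z^3 + (41296/25)*x^1*y^5*z^2 + (14016/25)*x^1*y^6*z^1 + (1568/25)*x^1*y^7 + (2928/25)*x^2*z^6 + (5488/5)*x^2*y^1*z^5 + (73376/25)*x^2*y^2*z^4 + (99328/25)*x^2*y^3*z^3 + (73376/25)*x^2*y^4*z^2 + (5488/5)*x^2*y^5*z^1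 + (2928/25)*x^2*y^6 + (2896/25)*x^3*z^5 + (29744/25)*x^3*y^1*z^4 + (68352/25)*x^3*y^2*z^3 + (68352/25)*x^3*y^3*z^2 + (29744/25)*x^3*y^4*z^1 + (2896/25)*x^3*y^5 + (1888/25)*x^4*z^4 + (19184/25)*x^4*y^1*z^3 + (31392/25)*x^4*y^2*z^2 + (19184/25)*x^4*y^3*z^1 + (1888/25)*x^4*y^4 + (528/25)*x^5*z^3 + (6384/25)*x^5*y^1*z^2 + (6384/25)*x^5*y^2*z^1 + (528/25)*x^5*y^3 + (176/25)*x^6*z^2 + (1952/25)*x^6*y^1*z^1 + (176/25)*x^6*y^2) by (unfold A, B, C, S, s1, s2, s3; field).
  assert (Apos : 0 < A).
  { rewrite hA. apply Rplus_le_lt_0_compat; [posi| apply Rmult_lt_0_compat; [lra| apply pow_lt; lra]]. }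
  assert (Dpos : 0 <= 4*A*C - B^2) by (rewrite hD; posi).
  assert (s1pos : 0 < s1) by (unfold s1; apply pow_lt; lra).
  assert (F : 0 <= A*a2^2 + B*a2*a3 + C*a3^2).
  { assert (0 <= 4*A*(A*a2^2 + B*a2*a3 + C*a3^2)).
    { replace (4*A*(A*a2^2 + B*a2*a3 + C*a3^2)) with ((2*A*a2+B*a3)^2 + (4*A*C-B^2)*a3^2) by ring.
      assert (0 <= (2*A*a2+B*a3)^2) by (apply pow2_ge_0). assert (0 <= a3^2) by apply pow2_ge_0.
      nra. }
    nra. }
  assert (key : s1 * ((s1+s2+s3)/2 * (a1^2+3*a2^2+3*a3^2-(a1+a2+a3)^2) - 26/25 * s1 * (a1+a2+a3)^2)
     = S/2 * (-2*(s1*a1)*(a2+a3) + 2*s1*(a2^2+a3^2-a2*a3)) - 26/25*((s1*a1) + s1*a2 + s1*a3)^2)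
    by (unfold S; ring).
  replace (s1*a1) with (-(s2*a2+s3*a3)) in key by lra.
  assert (key2 : s1 * ((s1+s2+s3)/2 * (a1^2+3*a2^2+3*a3^2-(a1+a2+a3)^2) - 26/25 * s1 * (a1+a2+a3)^2)
     = A*a2^2 + B*a2*a3 + C*a3^2) by (rewrite key; unfold A, B, C, S; field).
  assert (0 <= (s1+s2+s3)/2 * (a1^2+3*a2^2+3*a3^2-(a1+a2+a3)^2) - 26/25 * s1 * (a1+a2+a3)^2).
  { apply (Rmult_le_reg_l s1); [exact s1pos|]. rewrite Rmult_0_r, key2. exact F. }
  unfold S in *; lra.
Qed.





Lemma tri_aux (u1 u2 u3 : R) : 0 < u1 -> 0 < u2 -> 0 < u3 ->
  (u1^2 - u2^2 - u3^2)^2 < 4*u2^2*u3^2 -> u1 < u2 + u3.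
Proof.
  intros h1 h2 h3 h.
  assert (u1^2 - u2^2 - u3^2 < 2*u2*u3).
  { destruct (Rlt_or_le (u1^2 - u2^2 - u3^2) 0). nra.
    assert (0 < 2*u2*u3) by nra. nra. }
  nra.
Qed.

Lemma diag_sigma (s1 s2 s3 a1 a2 a3 : R) : 0 < s1 -> 0 < s2 -> 0 < s3 ->
  (s1+s2+s3)^2 < 4*(s1*s2+s1*s3+s2*s3) ->
  s1*a1+s2*a2+s3*a3 = 0 ->
  (s1+s2+s3)/2 * (a1^2+3*a2^2+3*a3^2-(a1+a2+a3)^2) >= 26/25 * s1 * (a1+a2+a3)^2.
Proof.
  intros h1 h2 h3 hg hc.
  pose (u1 := sqrt s1). pose (u2 := sqrt s2). pose (u3 := sqrt s3).
  assert (e1 : u1^2 = s1) by (unfold u1; apply sqrt_sq2; lra).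
  assert (e2 : u2^2 = s2) by (unfold u2; apply sqrt_sq2; lra).
  assert (e3 : u3^2 = s3) by (unfold u3; apply sqrt_sq2; lra).
  assert (p1 : 0 < u1) by (unfold u1; apply sqrt_lt_R0; lra).
  assert (p2 : 0 < u2) by (unfold u2; apply sqrt_lt_R0; lra).
  assert (p3 : 0 < u3) by (unfold u3; apply sqrt_lt_R0; lra).
  assert (hg' : (s1 - s2 - s3)^2 < 4*s2*s3) by nra.
  assert (t1 : u1 < u2 + u3) by (apply tri_aux; auto; rewrite e1, e2, e3; nra).
  assert (t2 : u2 < u1 + u3) by (apply tri_aux; auto; rewrite e1, e2, e3; nra).
  assert (t3 : u3 < u1 + u2) by (apply tri_aux; auto; rewrite e1, e2, e3; nra).
  pose proof (diag_ravi ((u2+u3-u1)/2) ((u1+u3-u2)/2) ((u1+u2-u3)/2) a1 a2 a3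
    ltac:(lra) ltac:(lra) ltac:(lra)) as H.
  cbv zeta in H.
  replace ((u1 + u3 - u2) / 2 + (u1 + u2 - u3) / 2) with u1 in H by field.
  replace ((u2 + u3 - u1) / 2 + (u1 + u2 - u3) / 2) with u2 in H by field.
  replace ((u2 + u3 - u1) / 2 + (u1 + u3 - u2) / 2) with u3 in H by field.
  rewrite e1, e2, e3 in H. apply H. exact hc.
Qed.

Lemma cubic_root (b c d : R) : exists z, z^3 + b*z^2 + c*z + d = 0.
Proof.
  set (M := 1 + Rabs b + Rabs c + Rabs d).
  pose proof (Rabs_pos b). pose proof (Rabs_pos c). pose proof (Rabs_pos d).
  pose proof (Rle_abs b). pose proof (Rle_abs c). pose proof (Rle_abs d).
  pose proof (Rabs_Ropp b). pose proof (Rle_abs (-b)). pose proof (Rle_abs (-c)). pose proof (Rle_abs (-d)). rewrite Rabs_Ropp in *.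
  assert (hM : 1 <= M) by (unfold M; lra).
  assert (hM2 : M <= M^2) by nra.
  assert (fM : 0 < M^3 + b*M^2 + c*M + d).
  { assert (b*M^2 >= - Rabs b * M^2) by nra.
    assert (c*M >= - Rabs c * M^2) by nra.
    assert (d >= - Rabs d * M^2) by nra.
    assert (M^3 = M * M^2) by ring.
    assert (hMM : M - (Rabs b + Rabs c + Rabs d) = 1) by (unfold M; ring).
    assert (M^3 - (Rabs b + Rabs c + Rabs d)*M^2 = M^2) by (replace (M^3) with (M*M^2) by ring; nra).
    nra. }
  assert (fm : (-M)^3 + b*(-M)^2 + c*(-M) + d < 0).
  { assert (b*M^2 <= Rabs b * M^2) by nra.
    assert (- c*M <= Rabs c * M^2) by nra.
    assert (d <= Rabs d * M^2) by nra.
    assert (hMM : M - (Rabs b + Rabs c + Rabs d) = 1) by (unfold M; ring).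
    assert (M^3 - (Rabs b + Rabs c + Rabs d)*M^2 = M^2) by (replace (M^3) with (M*M^2) by ring; nra).
    nra. }
  destruct (IVT (fun z => z^3 + b*z^2 + c*z + d) (-M) M) as [z [_ hz]].
  - apply derivable_continuous. reg.
  - lra.
  - exact fm.
  - exact fM.
  - exists z. exact hz.
Qed.


Lemma sq3_zero (x y z : R) : x^2+y^2+z^2 <= 0 -> x = 0 /\ y = 0 /\ z = 0.
Proof. intros h. repeat split; nra. Qed.

Ltac try_cand x y z :=
  let Hp := fresh "Hp" in let Hn := fresh "Hn" in
  destruct (Rlt_or_le 0 (x^2+y^2+z^2)) as [Hp|Hn];
  [ exists x, y, z; split; [exact Hp|]; clear Hp; repeat split; nsatz
  | apply sq3_zero in Hn; destruct Hn as [? [? ?]] ].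

Lemma kernel3 (m00 m01 m02 m11 m12 m22 : R) :
  m00*(m11*m22-m12*m12) - m01*(m01*m22 - m12*m02) + m02*(m01*m12 - m11*m02) = 0 ->
  exists v0 v1 v2, 0 < v0^2+v1^2+v2^2 /\
    m00*v0 + m01*v1 + m02*v2 = 0 /\ m01*v0 + m11*v1 + m12*v2 = 0 /\
    m02*v0 + m12*v1 + m22*v2 = 0.
Proof.
  intros hd.
  try_cand (m01*m12 - m02*m11) (m02*m01 - m00*m12) (m00*m11 - m01*m01).
  try_cand (m01*m22 - m02*m12) (m02*m02 - m00*m22) (m00*m12 - m01*m02).
  try_cand (m11*m22 - m12*m12) (m12*m02 - m01*m22) (m01*m12 - m11*m02).
  (* rank <= 1 *)
  try_cand 0 m02 (-m01). try_cand (-m02) 0 m00.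
  try_cand 0 m12 (-m11). try_cand (-m12) 0 m01.
  try_cand 0 m22 (-m12). try_cand (-m22) 0 m02.
  exists 1, 0, 0. split; [lra|]. subst. repeat split; nsatz.
Qed.







Lemma normalize3 (x y z : R) : 0 < x^2+y^2+z^2 ->
  exists n, 0 < n /\ (x/n)^2 + (y/n)^2 + (z/n)^2 = 1.
Proof.
  intros h. exists (sqrt (x^2+y^2+z^2)).
  assert (hn : 0 < sqrt (x^2+y^2+z^2)) by (apply sqrt_lt_R0; exact h).
  split; [exact hn|].
  assert (e : (sqrt (x^2+y^2+z^2))^2 = x^2+y^2+z^2)
    by (apply sqrt_sq2; lra).
  replace ((x / sqrt (x ^ 2 + y ^ 2 + z ^ 2)) ^ 2 + (y / sqrt (x ^ 2 + y ^ 2 + z ^ 2)) ^ 2 +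
    (z / sqrt (x ^ 2 + y ^ 2 + z ^ 2)) ^ 2) with ((x^2+y^2+z^2) / (sqrt (x^2+y^2+z^2))^2)
    by (field; lra).
  rewrite e. field. lra.
Qed.

Lemma det_char : forall h00 h01 h02 h11 h12 h22 l : R,
 (h00-l)*((h11-l)*(h22-l)-h12*h12) - h01*(h01*(h22-l) - h12*h02) + h02*(h01*h12 - (h11-l)*h02)
 = - (l^3 + (-(h00+h11+h22))*l^2 + (h00*h11 - h01*h01 + h00*h22 - h02*h02 + h11*h22 - h12*h12)*l
 + (-(h00*(h11*h22-h12*h12) - h01*(h01*h22 - h12*h02) + h02*(h01*h12 - h11*h02)))).
intros. ring.
Qed.

Lemma eigvec (h00 h01 h02 h11 h12 h22 : R) : exists l v0 v1 v2,
  v0^2+v1^2+v2^2 = 1 /\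
  h00*v0 + h01*v1 + h02*v2 = l*v0 /\ h01*v0 + h11*v1 + h12*v2 = l*v1 /\
  h02*v0 + h12*v1 + h22*v2 = l*v2.
Proof.
  destruct (cubic_root (-(h00+h11+h22))
     (h00*h11 - h01*h01 + h00*h22 - h02*h02 + h11*h22 - h12*h12)
     (-(h00*(h11*h22-h12*h12) - h01*(h01*h22 - h12*h02) + h02*(h01*h12 - h11*h02)))) as [l hl].
  destruct (kernel3 (h00-l) h01 h02 (h11-l) h12 (h22-l)) as [v0 [v1 [v2 [hp [e1 [e2 e3]]]]]].
  { rewrite det_char, hl. ring. }
  destruct (normalize3 v0 v1 v2 hp) as [n [hn hu]].
  exists l, (v0/n), (v1/n), (v2/n). split; [exact hu|].
  repeat split.
  - replace (h00 * (v0 / n) + h01 * (v1 / n) + h02 * (v2 / n)) with ((h00*v0+h01*v1+h02*v2)/n) by (field; lra).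
    replace (h00*v0+h01*v1+h02*v2) with (l*v0) by lra. field. lra.
  - replace (h01 * (v0 / n) + h11 * (v1 / n) + h12 * (v2 / n)) with ((h01*v0+h11*v1+h12*v2)/n) by (field; lra).
    replace (h01*v0+h11*v1+h12*v2) with (l*v1) by lra. field. lra.
  - replace (h02 * (v0 / n) + h12 * (v1 / n) + h22 * (v2 / n)) with ((h02*v0+h12*v1+h22*v2)/n) by (field; lra).
    replace (h02*v0+h12*v1+h22*v2) with (l*v2) by lra. field. lra.
Qed.

Lemma perp3 (v0 v1 v2 : R) : v0^2+v1^2+v2^2 = 1 ->
  exists w0 w1 w2, w0^2+w1^2+w2^2 = 1 /\ v0*w0+v1*w1+v2*w2 = 0.
Proof.
  intros h.
  destruct (Rlt_or_le 0 (0^2 + v2^2 + (-v1)^2)) as [p|p].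
  { destruct (normalize3 0 v2 (-v1) p) as [n [hn hu]]. exists (0/n), (v2/n), (-v1/n).
    split; [exact hu|]. field. lra. }
  destruct (Rlt_or_le 0 ((-v2)^2 + 0^2 + v0^2)) as [q|q].
  { destruct (normalize3 (-v2) 0 v0 q) as [n [hn hu]]. exists (-v2/n), (0/n), (v0/n).
    split; [exact hu|]. field. lra. }
  exfalso. ring_simplify in p. ring_simplify in q. pose proof (pow2_ge_0 v0). pose proof (pow2_ge_0 v1). pose proof (pow2_ge_0 v2). lra.
Qed.

Lemma rot2 (a b c : R) : exists al be, al^2 + be^2 = 1 /\ al*be*(c-a) + b*(al^2-be^2) = 0.
Proof.
  destruct (Req_dec b 0) as [hb|hb].
  { exists 1, 0. subst. split; ring. }
  set (r := sqrt ((a-c)^2 + 4*b^2)).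
  assert (hr : r^2 = (a-c)^2 + 4*b^2)
    by (unfold r; apply sqrt_sq2; pose proof (pow2_ge_0 (a-c)); pose proof (pow2_ge_0 b); lra).
  assert (hp : 0 < b^2 + ((c-a+r)/2)^2 + 0^2).
  { assert (0 < b^2) by (replace (b^2) with (Rsqr b) by (unfold Rsqr; ring); apply Rsqr_pos_lt; exact hb). pose proof (pow2_ge_0 ((c-a+r)/2)). lra. }
  destruct (normalize3 b ((c-a+r)/2) 0 hp) as [n [hn hu]].
  exists (b/n), ((c-a+r)/2/n). split.
  - replace (0/n) with 0 in hu by (field; lra). lra.
  - apply (Rmult_eq_reg_l (n^2)); [|nra].
    field_simplify; [|lra]. nra.
Qed.






Lemma row_col (a b c d e f g h i : R) :
  a*a+b*b+c*c = 1 -> d*d+e*e+f*f=1 -> g*g+h*h+i*i=1 ->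
  a*d+b*e+c*f = 0 -> a*g+b*h+c*i=0 -> d*g+e*h+f*i=0 ->
  a*a+d*d+g*g = 1 /\ b*b+e*e+h*h = 1 /\ c*c+f*f+i*i = 1 /\
  a*b+d*e+g*h = 0 /\ a*c+d*f+g*i = 0 /\ b*c+e*f+h*i = 0.
Proof. intros. repeat split; nsatz. Qed.

Definition mk3 (a b c : R) (i : nat) : R :=
  match i with 0%nat => a | 1%nat => b | _ => c end.

Lemma spectral (H : nat -> nat -> R) :
  (forall i j, (i<3)%nat -> (j<3)%nat -> H i j = H j i) ->
  exists Q : nat -> nat -> R,
    (forall a b, (a<3)%nat -> (b<3)%nat -> sum3 (fun i => Q a i * Q b i) = kron a b) /\
    (forall i j, (i<3)%nat -> (j<3)%nat -> sum3 (fun a => Q a i * Q a j) = kron i j) /\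
    (forall a b, (a<3)%nat -> (b<3)%nat -> a <> b ->
       sum3 (fun i => sum3 (fun j => Q a i * H i j * Q b j)) = 0).
Proof.
  intros sym.
  assert (s10 : H 1%nat 0%nat = H 0%nat 1%nat) by (apply sym; lia).
  assert (s20 : H 2%nat 0%nat = H 0%nat 2%nat) by (apply sym; lia).
  assert (s21 : H 2%nat 1%nat = H 1%nat 2%nat) by (apply sym; lia).
  destruct (eigvec (H 0%nat 0%nat) (H 0%nat 1%nat) (H 0%nat 2%nat) (H 1%nat 1%nat) (H 1%nat 2%nat) (H 2%nat 2%nat))
    as [l [v0 [v1 [v2 [hv [e0 [e1 e2]]]]]]].
  destruct (perp3 v0 v1 v2 hv) as [w0 [w1 [w2 [hw hvw]]]].
  set (z0 := v1*w2 - v2*w1). set (z1 := v2*w0 - v0*w2). set (z2 := v0*w1 - v1*w0).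
  set (Hx := fun x0 x1 x2 y0 y1 y2 =>
     x0*(H 0%nat 0%nat*y0 + H 0%nat 1%nat*y1 + H 0%nat 2%nat*y2)
   + x1*(H 0%nat 1%nat*y0 + H 1%nat 1%nat*y1 + H 1%nat 2%nat*y2)
   + x2*(H 0%nat 2%nat*y0 + H 1%nat 2%nat*y1 + H 2%nat 2%nat*y2)).
  destruct (rot2 (Hx w0 w1 w2 w0 w1 w2) (Hx w0 w1 w2 z0 z1 z2) (Hx z0 z1 z2 z0 z1 z2))
    as [al [be [hab hrot]]].
  unfold Hx in hrot.
  replace (al^2) with (al*al) in hrot by ring. replace (be^2) with (be*be) in hrot by ring.
  assert (hv' : v0*v0+v1*v1+v2*v2 = 1) by (rewrite <- hv; ring).
  assert (hw' : w0*w0+w1*w1+w2*w2 = 1) by (rewrite <- hw; ring).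
  assert (hab' : al*al+be*be = 1) by (rewrite <- hab; ring).
  clear hv hw hab.
  assert (hz : z0*z0+z1*z1+z2*z2 = 1) by (unfold z0, z1, z2; clear -hv' hw' hvw; nsatz).
  assert (hvz : v0*z0+v1*z1+v2*z2 = 0) by (unfold z0, z1, z2; ring).
  assert (hwz : w0*z0+w1*z1+w2*z2 = 0) by (unfold z0, z1, z2; ring).
  set (q0 := al*w0+be*z0). set (q1 := al*w1+be*z1). set (q2 := al*w2+be*z2).
  set (r0 := -be*w0+al*z0). set (r1 := -be*w1+al*z1). set (r2 := -be*w2+al*z2).
  assert (R1 : v0*v0+v1*v1+v2*v2 = 1) by exact hv'.
  assert (R2 : q0*q0+q1*q1+q2*q2 = 1) by (unfold q0, q1, q2; clear -hw' hz hwz hab'; nsatz).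
  assert (R3 : r0*r0+r1*r1+r2*r2 = 1) by (unfold r0, r1, r2; clear -hw' hz hwz hab'; nsatz).
  assert (R12 : v0*q0+v1*q1+v2*q2 = 0) by (unfold q0, q1, q2; clear -hvw hvz; nsatz).
  assert (R13 : v0*r0+v1*r1+v2*r2 = 0) by (unfold r0, r1, r2; clear -hvw hvz; nsatz).
  assert (R23 : q0*r0+q1*r1+q2*r2 = 0) by (unfold q0, q1, q2, r0, r1, r2; clear -hw' hz hwz hab'; nsatz).
  destruct (row_col v0 v1 v2 q0 q1 q2 r0 r1 r2 R1 R2 R3 R12 R13 R23) as [C1 [C2 [C3 [C4 [C5 C6]]]]].
  exists (fun a => match a with 0%nat => mk3 v0 v1 v2 | 1%nat => mk3 q0 q1 q2 | _ => mk3 r0 r1 r2 end).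
  split; [|split].
  - intros a b ha hb.
    destruct a as [|[|[|a]]]; try lia; destruct b as [|[|[|b]]]; try lia;
      unfold sum3, kron; simpl; lra.
  - intros a b ha hb.
    destruct a as [|[|[|a]]]; try lia; destruct b as [|[|[|b]]]; try lia;
      unfold sum3, kron; simpl; lra.
  - intros a b ha hb hne.
    destruct a as [|[|[|a]]]; try lia; destruct b as [|[|[|b]]]; try lia; try congruence;
      unfold sum3; simpl; rewrite ?s10, ?s20, ?s21.
    all: clear -e0 e1 e2 R12 R13 hrot; unfold q0, q1, q2, r0, r1, r2 in *; unfold z0, z1, z2 in *; nsatz.
Qed.


Lemma sum3_ext (f g : nat -> R) : (forall i, f i = g i) -> sum3 f = sum3 g.
Proof. intros h. unfold sum3. rewrite !h. reflexivity. Qed.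

Definition colQ (Q : nat -> nat -> R) (i j : nat) : R := sum3 (fun a => Q a i * Q a j).

Ltac col_kron COL :=
  repeat match goal with |- context [colQ ?Q ?i ?j] => rewrite (COL i j) by lia end;
  unfold kron; simpl.

Lemma vec_norm (Q : nat -> nat -> R)
  (COL : forall i j, (i<3)%nat -> (j<3)%nat -> colQ Q i j = kron i j) (v : nat -> R) :
  sum3 (fun a => (sum3 (fun i => Q a i * v i))^2) = sum3 (fun i => (v i)^2).
Proof.
  transitivity (sum3 (fun i => sum3 (fun j => colQ Q i j * v i * v j))).
  - unfold colQ, sum3. ring.
  - unfold sum3. col_kron COL. ring.
Qed.

Definition Fr (Q : nat -> nat -> R) (T : nat -> nat -> nat -> R) a j k :=
  sum3 (fun i => Q a i * T i j k).
Definition Gr (Q : nat -> nat -> R) (T : nat -> nat -> nat -> R) a b k :=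
  sum3 (fun j => Q b j * Fr Q T a j k).
Definition Pr (Q : nat -> nat -> R) (T : nat -> nat -> nat -> R) a b c :=
  sum3 (fun i => sum3 (fun j => sum3 (fun k => Q a i * Q b j * Q c k * T i j k))).
Definition N3 (X : nat -> nat -> nat -> R) :=
  sum3 (fun i => sum3 (fun j => sum3 (fun k => (X i j k)^2))).

Lemma norm_rot (Q : nat -> nat -> R)
  (COL : forall i j, (i<3)%nat -> (j<3)%nat -> colQ Q i j = kron i j) T :
  N3 (Pr Q T) = N3 T.
Proof.
  assert (e1 : forall a b, sum3 (fun c => (Pr Q T a b c)^2) = sum3 (fun k => (Gr Q T a b k)^2)).
  { intros a b. rewrite <- (vec_norm Q COL (Gr Q T a b)). apply sum3_ext. intros c.
    f_equal. unfold Pr, Gr, Fr, sum3. ring. }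
  assert (e2 : forall a k, sum3 (fun b => (Gr Q T a b k)^2) = sum3 (fun j => (Fr Q T a j k)^2)).
  { intros a k. apply (vec_norm Q COL (fun j => Fr Q T a j k)). }
  assert (e3 : forall j k, sum3 (fun a => (Fr Q T a j k)^2) = sum3 (fun i => (T i j k)^2)).
  { intros j k. apply (vec_norm Q COL (fun i => T i j k)). }
  transitivity (sum3 (fun a => sum3 (fun b => sum3 (fun k => (Gr Q T a b k)^2)))).
  { unfold N3. apply sum3_ext; intro a. apply sum3_ext; intro b. apply e1. }
  transitivity (sum3 (fun a => sum3 (fun k => sum3 (fun b => (Gr Q T a b k)^2)))).
  { unfold sum3. ring. }
  transitivity (sum3 (fun a => sum3 (fun k => sum3 (fun j => (Fr Q T a j k)^2)))).
  { apply sum3_ext; intro a. apply sum3_ext; intro k. apply e2. }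
  transitivity (sum3 (fun j => sum3 (fun k => sum3 (fun a => (Fr Q T a j k)^2)))).
  { unfold sum3. ring. }
  transitivity (sum3 (fun j => sum3 (fun k => sum3 (fun i => (T i j k)^2)))).
  { apply sum3_ext; intro j. apply sum3_ext; intro k. apply e3. }
  unfold N3, sum3. ring.
Qed.

Lemma trace_rot (Q : nat -> nat -> R)
  (COL : forall i j, (i<3)%nat -> (j<3)%nat -> colQ Q i j = kron i j) T c :
  sum3 (fun a => Pr Q T a a c) = sum3 (fun k => Q c k * sum3 (fun i => T i i k)).
Proof.
  transitivity (sum3 (fun k => Q c k * sum3 (fun i => sum3 (fun j => colQ Q i j * T i j k)))).
  - unfold Pr, colQ, sum3. ring.
  - unfold sum3. col_kron COL. ring.
Qed.

Definition rotS (Q : nat -> nat -> R) (S : nat -> nat -> R) a b :=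
  sum3 (fun p => sum3 (fun q => Q a p * Q b q * S p q)).

Lemma con_rot (Q : nat -> nat -> R)
  (COL : forall i j, (i<3)%nat -> (j<3)%nat -> colQ Q i j = kron i j) T S c :
  sum3 (fun a => sum3 (fun b => rotS Q S a b * Pr Q T a b c))
  = sum3 (fun k => Q c k * sum3 (fun i => sum3 (fun j => S i j * T i j k))).
Proof.
  transitivity (sum3 (fun k => Q c k * sum3 (fun p => sum3 (fun q => sum3 (fun i => sum3 (fun j =>
     colQ Q p i * colQ Q q j * S p q * T i j k)))))).
  - unfold rotS, Pr, colQ, sum3. ring.
  - unfold sum3. col_kron COL. ring.
Qed.

Lemma quad_rot (Q : nat -> nat -> R)
  (COL : forall i j, (i<3)%nat -> (j<3)%nat -> colQ Q i j = kron i j) S v :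
  sum3 (fun a => sum3 (fun b => rotS Q S a b * (sum3 (fun k => Q a k * v k) * sum3 (fun l => Q b l * v l))))
  = sum3 (fun p => sum3 (fun q => S p q * v p * v q)).
Proof.
  transitivity (sum3 (fun p => sum3 (fun q => sum3 (fun k => sum3 (fun l =>
     colQ Q p k * colQ Q q l * S p q * v k * v l))))).
  - unfold rotS, colQ, sum3. ring.
  - unfold sum3. col_kron COL. ring.
Qed.

Lemma mat_norm_rot (Q : nat -> nat -> R)
  (COL : forall i j, (i<3)%nat -> (j<3)%nat -> colQ Q i j = kron i j) S :
  sum3 (fun a => sum3 (fun b => (rotS Q S a b)^2)) = sum3 (fun p => sum3 (fun q => (S p q)^2)).
Proof.
  transitivity (sum3 (fun p => sum3 (fun q => sum3 (fun k => sum3 (fun l =>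
     colQ Q p k * colQ Q q l * S p q * S k l))))).
  - unfold rotS, colQ, sum3. ring.
  - unfold sum3. col_kron COL. ring.
Qed.

Ltac tnorm T Ts12 Ts23 :=
  repeat match goal with
  | |- context [T 1%nat 0%nat ?k] => rewrite (Ts12 1%nat 0%nat k) by lia
  | |- context [T 2%nat 0%nat ?k] => rewrite (Ts12 2%nat 0%nat k) by lia
  | |- context [T 2%nat 1%nat ?k] => rewrite (Ts12 2%nat 1%nat k) by lia
  | |- context [T ?i 1%nat 0%nat] => rewrite (Ts23 i 1%nat 0%nat) by lia
  | |- context [T ?i 2%nat 0%nat] => rewrite (Ts23 i 2%nat 0%nat) by lia
  | |- context [T ?i 2%nat 1%nat] => rewrite (Ts23 i 2%nat 1%nat) by lia
  end.

Lemma P_sym (Q : nat -> nat -> R) (T : nat -> nat -> nat -> R)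
  (Ts12 : forall i j k, (i<3)%nat -> (j<3)%nat -> (k<3)%nat -> T i j k = T j i k)
  (Ts23 : forall i j k, (i<3)%nat -> (j<3)%nat -> (k<3)%nat -> T i j k = T i k j) :
  (forall a b c, Pr Q T a b c = Pr Q T b a c) /\ (forall a b c, Pr Q T a b c = Pr Q T a c b).
Proof.
  split; intros a b c; unfold Pr, sum3; tnorm T Ts12 Ts23; ring.
Qed.


Definition sig2 (H : nat -> nat -> R) : R :=
  (H 0%nat 0%nat * H 1%nat 1%nat - H 0%nat 1%nat * H 1%nat 0%nat) +
  (H 0%nat 0%nat * H 2%nat 2%nat - H 0%nat 2%nat * H 2%nat 0%nat) +
  (H 1%nat 1%nat * H 2%nat 2%nat - H 1%nat 2%nat * H 2%nat 1%nat).

Lemma P_ineq (P : nat -> nat -> nat -> R)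
  (S12 : forall a b c, P a b c = P b a c) (S23 : forall a b c, P a b c = P a c b) :
  N3 P >= sum3 (fun c => sum3 (fun a => (P a a c)^2) + 2 * sum3 (fun a => (P a a c)^2) - 2 * (P c c c)^2).
Proof.
  unfold N3, sum3.
  tnorm P (fun i j k (_ : (i<3)%nat) (_ : (j<3)%nat) (_ : (k<3)%nat) => S12 i j k)
          (fun i j k (_ : (i<3)%nat) (_ : (j<3)%nat) (_ : (k<3)%nat) => S23 i j k).
  pose proof (pow2_ge_0 (P 0%nat 1%nat 2%nat)). lra.
Qed.

Lemma sum3_ext_lt (f g : nat -> R) : (forall i, (i<3)%nat -> f i = g i) -> sum3 f = sum3 g.
Proof. intros h. unfold sum3. rewrite !h by lia. reflexivity. Qed.

Lemma diag_sum (M X : nat -> nat -> R) :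
  (forall a b, (a<3)%nat -> (b<3)%nat -> a <> b -> M a b = 0) ->
  sum3 (fun a => sum3 (fun b => M a b * X a b)) = sum3 (fun a => M a a * X a a).
Proof.
  intros h. unfold sum3.
  rewrite (h 0%nat 1%nat), (h 0%nat 2%nat), (h 1%nat 0%nat), (h 1%nat 2%nat),
      (h 2%nat 0%nat), (h 2%nat 1%nat) by lia. ring.
Qed.

Lemma alg_main (H : nat -> nat -> R) (T : nat -> nat -> nat -> R) :
  (forall i j, (i<3)%nat -> (j<3)%nat -> H i j = H j i) ->
  (forall i j k, (i<3)%nat -> (j<3)%nat -> (k<3)%nat -> T i j k = T j i k) ->
  (forall i j k, (i<3)%nat -> (j<3)%nat -> (k<3)%nat -> T i j k = T i k j) ->
  0 < sum3 (fun i => H i i) -> 0 < sig2 H ->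
  (forall k, (k<3)%nat -> sum3 (fun i => sum3 (fun j =>
      (sum3 (fun l => H l l) * kron i j - H i j) * T i j k)) = 0) ->
  sum3 (fun i => H i i) * (N3 T - sum3 (fun k => (sum3 (fun i => T i i k))^2))
  >= 26/25 * sum3 (fun i => sum3 (fun j =>
      (sum3 (fun l => H l l) * kron i j - H i j) * sum3 (fun l => T l l i) * sum3 (fun l => T l l j))).
Proof.
  intros Hs Ts12 Ts23 hD h2 hcon.
  set (D := sum3 (fun i => H i i)) in *.
  set (S := fun i j => D * kron i j - H i j).
  set (t := fun k => sum3 (fun i => T i i k)).
  change (D * (N3 T - sum3 (fun k => (t k)^2)) >=
     26/25 * sum3 (fun i => sum3 (fun j => S i j * t i * t j))).
  destruct (spectral H Hs) as [Q [ROW [COL OFF]]].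
  assert (COL' : forall i j, (i<3)%nat -> (j<3)%nat -> colQ Q i j = kron i j) by exact COL.
  set (Hp := fun a b => sum3 (fun i => sum3 (fun j => Q a i * H i j * Q b j))).
  assert (OFF' : forall a b, (a<3)%nat -> (b<3)%nat -> a <> b -> Hp a b = 0) by exact OFF.
  assert (rS : forall a b, (a<3)%nat -> (b<3)%nat -> rotS Q S a b = D * kron a b - Hp a b).
  { intros a b ha hb. rewrite <- (ROW a b ha hb). unfold rotS, S, Hp, sum3, kron. simpl. ring. }
  set (P := Pr Q T).
  destruct (P_sym Q T Ts12 Ts23) as [PS12 PS23].
  pose (s := fun a => D - Hp a a).
  assert (rS0 : forall a b, (a<3)%nat -> (b<3)%nat -> a <> b -> rotS Q S a b = 0).
  { intros a b ha hb hab. rewrite rS by auto. rewrite (OFF' a b ha hb hab).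
    unfold kron. destruct (Nat.eqb_spec a b); [congruence|]. ring. }
  assert (rSd : forall a, (a<3)%nat -> rotS Q S a a = s a).
  { intros a ha. rewrite rS by auto. unfold kron, s. rewrite Nat.eqb_refl. ring. }
  assert (F1 : Hp 0%nat 0%nat + Hp 1%nat 1%nat + Hp 2%nat 2%nat = D).
  { transitivity (sum3 (fun i => sum3 (fun j => colQ Q i j * H i j))).
    - unfold Hp, colQ, sum3. ring.
    - unfold sum3. col_kron COL'. unfold D, sum3. ring. }
  assert (F2 : (Hp 0%nat 0%nat)^2 + (Hp 1%nat 1%nat)^2 + (Hp 2%nat 2%nat)^2
               = sum3 (fun p => sum3 (fun q => (H p q)^2))).
  { rewrite <- (mat_norm_rot Q COL' H).
    assert (e : forall a b, rotS Q H a b = Hp a b) by (intros; unfold rotS, Hp, sum3; ring).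
    unfold sum3 at 1. unfold sum3 at 1 2 3. rewrite !e.
    rewrite (OFF' 0%nat 1%nat), (OFF' 0%nat 2%nat), (OFF' 1%nat 0%nat), (OFF' 1%nat 2%nat),
      (OFF' 2%nat 0%nat), (OFF' 2%nat 1%nat) by lia. ring. }
  assert (F3 : sig2 H = (D^2 - sum3 (fun p => sum3 (fun q => (H p q)^2)))/2).
  { unfold sig2, D, sum3. rewrite (Hs 1%nat 0%nat), (Hs 2%nat 0%nat), (Hs 2%nat 1%nat) by lia.
    field. }
  set (l0 := Hp 0%nat 0%nat) in *. set (l1 := Hp 1%nat 1%nat) in *. set (l2 := Hp 2%nat 2%nat) in *.
  assert (hl : l0^2 + l1^2 + l2^2 < D^2).
  { rewrite F2. rewrite F3 in h2. lra. }
  assert (s0p : 0 < l1 + l2).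
  { destruct (Rlt_or_le 0 (l1+l2)) as [q|q]; [exact q|].
    assert (D <= l0) by lra. pose proof (pow2_ge_0 l1). pose proof (pow2_ge_0 l2). nra. }
  assert (s1p : 0 < l0 + l2).
  { destruct (Rlt_or_le 0 (l0+l2)) as [q|q]; [exact q|].
    assert (D <= l1) by lra. pose proof (pow2_ge_0 l0). pose proof (pow2_ge_0 l2). nra. }
  assert (s2p : 0 < l0 + l1).
  { destruct (Rlt_or_le 0 (l0+l1)) as [q|q]; [exact q|].
    assert (D <= l2) by lra. pose proof (pow2_ge_0 l0). pose proof (pow2_ge_0 l1). nra. }
  assert (es0 : s 0%nat = l1 + l2) by (unfold s; fold l0; lra).
  assert (es1 : s 1%nat = l0 + l2) by (unfold s; fold l1; lra).
  assert (es2 : s 2%nat = l0 + l1) by (unfold s; fold l2; lra).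
  assert (Gam : (s 0%nat + s 1%nat + s 2%nat)^2 <
      4*(s 0%nat * s 1%nat + s 0%nat * s 2%nat + s 1%nat * s 2%nat)).
  { rewrite es0, es1, es2. replace D with (l0+l1+l2) in hl by lra. nra. }
  assert (Fc : forall c, (c<3)%nat -> s 0%nat * P 0%nat 0%nat c + s 1%nat * P 1%nat 1%nat c
                                     + s 2%nat * P 2%nat 2%nat c = 0).
  { intros c hc. pose proof (con_rot Q COL' T S c) as e.
    rewrite (diag_sum (rotS Q S) (fun a b => Pr Q T a b c) rS0) in e.
    rewrite (sum3_ext_lt _ (fun a => s a * P a a c)) in e by (intros; rewrite rSd by auto; reflexivity).
    rewrite (sum3_ext_lt (fun k => Q c k * _) (fun k => 0)) in e.
    - unfold sum3 in e. lra.
    - intros k hk. replace (sum3 (fun i => sum3 (fun j => S i j * T i j k))) with 0. ring.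
      symmetry. apply hcon. exact hk. }
  set (tp := fun c => sum3 (fun a => P a a c)).
  assert (Etp : forall c, tp c = sum3 (fun k => Q c k * t k)) by (intro c; apply trace_rot; exact COL').
  assert (Et2 : sum3 (fun c => (tp c)^2) = sum3 (fun k => (t k)^2)).
  { rewrite <- (vec_norm Q COL' t). apply sum3_ext. intro c. rewrite Etp. reflexivity. }
  assert (Eq : sum3 (fun c => s c * tp c * tp c) = sum3 (fun i => sum3 (fun j => S i j * t i * t j))).
  { rewrite <- (quad_rot Q COL' S t).
    rewrite (diag_sum (rotS Q S) (fun a b => sum3 (fun k => Q a k * t k) * sum3 (fun l => Q b l * t l)))
      by exact rS0.
    apply sum3_ext_lt. intros a ha. rewrite rSd by auto. rewrite <- !Etp. ring. }
  assert (EN : N3 P = N3 T) by (apply norm_rot; exact COL').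
  pose proof (P_ineq P PS12 PS23) as PI.
  rewrite <- Et2, <- Eq, <- EN.
  pose proof (Fc 0%nat ltac:(lia)) as c0. pose proof (Fc 1%nat ltac:(lia)) as c1.
  pose proof (Fc 2%nat ltac:(lia)) as c2.
  assert (ss : s 0%nat + s 1%nat + s 2%nat = 2*D) by lra.
  pose proof (diag_sigma (s 0%nat) (s 1%nat) (s 2%nat) (P 0%nat 0%nat 0%nat) (P 1%nat 1%nat 0%nat)
     (P 2%nat 2%nat 0%nat) ltac:(lra) ltac:(lra) ltac:(lra) Gam ltac:(lra)) as d0.
  pose proof (diag_sigma (s 1%nat) (s 0%nat) (s 2%nat) (P 1%nat 1%nat 1%nat) (P 0%nat 0%nat 1%nat)
     (P 2%nat 2%nat 1%nat) ltac:(lra) ltac:(lra) ltac:(lra) ltac:(nra) ltac:(lra)) as d1.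
  pose proof (diag_sigma (s 2%nat) (s 0%nat) (s 1%nat) (P 2%nat 2%nat 2%nat) (P 0%nat 0%nat 2%nat)
     (P 1%nat 1%nat 2%nat) ltac:(lra) ltac:(lra) ltac:(lra) ltac:(nra) ltac:(lra)) as d2.
  rewrite ss in d0.
  replace (s 1%nat + s 0%nat + s 2%nat) with (2*D) in d1 by lra.
  replace (s 2%nat + s 0%nat + s 1%nat) with (2*D) in d2 by lra.
  unfold tp in *. unfold sum3 in *.
  assert (0 <= D * (N3 P - ((P 0%nat 0%nat 0%nat ^ 2 + P 1%nat 1%nat 0%nat ^ 2 + P 2%nat 2%nat 0%nat ^ 2 +
     2 * (P 0%nat 0%nat 0%nat ^ 2 + P 1%nat 1%nat 0%nat ^ 2 + P 2%nat 2%nat 0%nat ^ 2) - 2 * P 0%nat 0%nat 0%nat ^ 2) +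
    (P 0%nat 0%nat 1%nat ^ 2 + P 1%nat 1%nat 1%nat ^ 2 + P 2%nat 2%nat 1%nat ^ 2 +
     2 * (P 0%nat 0%nat 1%nat ^ 2 + P 1%nat 1%nat 1%nat ^ 2 + P 2%nat 2%nat 1%nat ^ 2) - 2 * P 1%nat 1%nat 1%nat ^ 2) +
    (P 0%nat 0%nat 2%nat ^ 2 + P 1%nat 1%nat 2%nat ^ 2 + P 2%nat 2%nat 2%nat ^ 2 +
     2 * (P 0%nat 0%nat 2%nat ^ 2 + P 1%nat 1%nat 2%nat ^ 2 + P 2%nat 2%nat 2%nat ^ 2) - 2 * P 2%nat 2%nat 2%nat ^ 2))))
    by (apply Rmult_le_pos; lra).
  lra.
Qed.


Ltac tupeq := match goal with
  | |- (?a,?b,?c) = (?d,?e,?f) =>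
      replace a with d by ring; replace b with e by ring; replace c with f by ring; reflexivity
  end.

Lemma shift_0 (x : R3) i : shift x i 0 = x.
Proof. destruct x as [[a b] c]. destruct i as [|[|[|i]]]; simpl; tupeq. Qed.

Lemma shift_add (x : R3) i s t : shift (shift x i s) i t = shift x i (s + t).
Proof. destruct x as [[a b] c]. destruct i as [|[|[|i]]]; simpl; tupeq. Qed.

Lemma shift_comm (x : R3) i j s t : shift (shift x i s) j t = shift (shift x j t) i s.
Proof.
  destruct x as [[a b] c].
  destruct i as [|[|[|i]]]; destruct j as [|[|[|j]]]; simpl; tupeq.
Qed.

Lemma pd_spec (f : R3 -> R) i x : (exists l, has_partial f i x l) -> has_partial f i x (pd i f x).
Proof. intros h. unfold pd. apply (epsilon_spec (inhabits 0) (fun l => has_partial f i x l) h). Qed.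

Lemma pd_unique (f : R3 -> R) i x l : has_partial f i x l -> pd i f x = l.
Proof.
  intros h. pose proof (pd_spec f i x (ex_intro _ l h)) as h2.
  exact (uniqueness_limite _ _ _ _ h2 h).
Qed.

Lemma pd_ext (f g : R3 -> R) i : (forall y, f y = g y) -> pd i f = pd i g.
Proof. intros h. replace g with f by (apply functional_extensionality; exact h). reflexivity. Qed.

Lemma dshift (f : R3 -> R) i y s0 l :
  has_partial f i (shift y i s0) l -> derivable_pt_lim (fun s => f (shift y i s)) s0 l.
Proof.
  unfold has_partial, derivable_pt_lim. intros h eps he.
  destruct (h eps he) as [d hd]. exists d. intros k hk hk2.
  specialize (hd k hk hk2). rewrite !shift_add in hd. rewrite Rplus_0_r in hd.
  rewrite Rplus_0_l in hd. exact hd.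
Qed.

Lemma hp_plus (f g : R3 -> R) i x a b : has_partial f i x a -> has_partial g i x b ->
  has_partial (fun y => f y + g y) i x (a + b).
Proof. intros h1 h2. unfold has_partial in *. exact (derivable_pt_lim_plus _ _ _ _ _ h1 h2). Qed.

Lemma hp_minus (f g : R3 -> R) i x a b : has_partial f i x a -> has_partial g i x b ->
  has_partial (fun y => f y - g y) i x (a - b).
Proof. intros h1 h2. unfold has_partial in *. exact (derivable_pt_lim_minus _ _ _ _ _ h1 h2). Qed.

Lemma hp_mult (f g : R3 -> R) i x a b : has_partial f i x a -> has_partial g i x b ->
  has_partial (fun y => f y * g y) i x (a * g x + f x * b).
Proof.
  intros h1 h2. unfold has_partial in *.
  pose proof (derivable_pt_lim_mult _ _ _ _ _ h1 h2) as h. cbv beta in h. rewrite !shift_0 in h. exact h.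
Qed.

Lemma hp_const (c : R) i x : has_partial (fun _ => c) i x 0.
Proof. unfold has_partial. apply (derivable_pt_lim_const c 0). Qed.

Lemma hp_scal (c : R) (f : R3 -> R) i x a : has_partial f i x a ->
  has_partial (fun y => c * f y) i x (c * a).
Proof.
  intros h. pose proof (hp_mult (fun _ => c) f i x 0 a (hp_const c i x) h) as h2.
  replace (c * a) with (0 * f x + c * a) by ring. exact h2.
Qed.

Lemma hp_ln (f : R3 -> R) i x a : 0 < f x -> has_partial f i x a ->
  has_partial (fun y => ln (f y)) i x (a / f x).
Proof.
  intros hp h. unfold has_partial in *.
  assert (hl : derivable_pt_lim ln ((fun t => f (shift x i t)) 0) (/ f x)).
  { rewrite shift_0. apply derivable_pt_lim_ln. exact hp. }
  pose proof (derivable_pt_lim_comp _ _ _ _ _ h hl) as hc.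
  unfold comp in hc. replace (a / f x) with (/ f x * a) by (field; lra). exact hc.
Qed.

Lemma hp_div (f g : R3 -> R) i x a b : g x <> 0 -> has_partial f i x a -> has_partial g i x b ->
  has_partial (fun y => f y / g y) i x ((a * g x - b * f x) / (g x)^2).
Proof.
  intros hg h1 h2. unfold has_partial in *.
  assert (hg' : (fun t => g (shift x i t)) 0 <> 0) by (simpl; rewrite shift_0; exact hg).
  pose proof (derivable_pt_lim_div _ _ _ _ _ h1 h2 hg') as h. cbv beta in h. rewrite !shift_0 in h.
  replace ((g x)^2) with (Rsqr (g x)) by (unfold Rsqr; ring). exact h.
Qed.

Lemma Ck_mono k (f : R3 -> R) : Ck (S k) f -> Ck k f.
Proof.
  revert f. induction k as [|k IH]; intros f h.
  - exact (proj1 h).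
  - destruct h as [hc hp]. split; [exact hc|]. intros i hi. destruct (hp i hi) as [e c].
    split; [exact e|]. apply IH. exact c.
Qed.

Lemma Ck_pd k (f : R3 -> R) i : (i<3)%nat -> Ck (S k) f -> Ck k (pd i f).
Proof. intros hi h. exact (proj2 (proj2 h i hi)). Qed.

Lemma Ck_ex k (f : R3 -> R) i x : (i<3)%nat -> Ck (S k) f -> has_partial f i x (pd i f x).
Proof. intros hi h. apply pd_spec. exact (proj1 (proj2 h i hi) x). Qed.

Lemma Ck_cont k (f : R3 -> R) : Ck k f -> cont3 f.
Proof. destruct k; simpl; [auto | intros h; exact (proj1 h)]. Qed.

Lemma dist_shift2 (x : R3) i j s t d : (i<3)%nat -> (j<3)%nat -> i <> j ->
  Rabs s < d -> Rabs t < d -> dist3 (shift (shift x i s) j t) x < d.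
Proof.
  intros hi hj hij hs ht. destruct x as [[a b] c].
  assert (h0 : Rabs 0 < d) by (rewrite Rabs_R0; pose proof (Rabs_pos s); lra).
  destruct i as [|[|[|i]]]; try lia; destruct j as [|[|[|j]]]; try lia; try congruence;
  unfold dist3, coord; simpl;
  repeat match goal with |- context [?p + ?q - ?p] => replace (p + q - p) with q by ring end;
  repeat match goal with |- context [?p - ?p] => replace (p - p) with 0 by ring end;
  repeat apply Rmax_lub_lt; assumption.
Qed.

Lemma eq_of_close (a b : R) : (forall eps, 0 < eps -> Rabs (a - b) < eps) -> a = b.
Proof.
  intros h. destruct (Req_dec a b) as [e|ne]; [exact e|].
  assert (0 < Rabs (a - b)) by (apply Rabs_pos_lt; lra).
  specialize (h _ H). lra.
Qed.

Lemma mvt2 (f : R3 -> R) k y1 y2 h : 0 < h ->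
  (forall z, has_partial f k z (pd k f z)) ->
  exists c, 0 < c < h /\
   (f (shift y1 k h) - f (shift y2 k h)) - (f y1 - f y2)
   = (pd k f (shift y1 k c) - pd k f (shift y2 k c)) * h.
Proof.
  intros hh hd.
  destruct (MVT_cor2 (fun s => f (shift y1 k s) - f (shift y2 k s))
     (fun s => pd k f (shift y1 k s) - pd k f (shift y2 k s)) 0 h hh) as [c [e hc]].
  - intros c _. apply (derivable_pt_lim_minus (fun s => f (shift y1 k s)) (fun s => f (shift y2 k s))).
    + apply dshift. apply hd.
    + apply dshift. apply hd.
  - exists c. split; [exact hc|]. rewrite !shift_0 in e. rewrite e. ring.
Qed.

Lemma mvt1 (f : R3 -> R) k y h : 0 < h ->
  (forall z, has_partial f k z (pd k f z)) ->
  exists c, 0 < c < h /\ f (shift y k h) - f y = pd k f (shift y k c) * h.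
Proof.
  intros hh hd.
  destruct (MVT_cor2 (fun s => f (shift y k s)) (fun s => pd k f (shift y k s)) 0 h hh) as [c [e hc]].
  - intros c _. apply dshift. apply hd.
  - exists c. split; [exact hc|]. rewrite !shift_0 in e. rewrite e. ring.
Qed.

Lemma delta_repr (f : R3 -> R) i j x h : (i<3)%nat -> (j<3)%nat -> i <> j -> 0 < h ->
  (forall z, has_partial f i z (pd i f z)) ->
  (forall z, has_partial (pd i f) j z (pd j (pd i f) z)) ->
  exists p, dist3 p x < h /\
    f (shift (shift x i h) j h) - f (shift x i h) - f (shift x j h) + f x = pd j (pd i f) p * (h * h).
Proof.
  intros hi hj hij hh d1 d2.
  destruct (mvt2 f i (shift x j h) x h hh d1) as [c1 [hc1 e1]].
  destruct (mvt1 (pd i f) j (shift x i c1) h hh d2) as [c2 [hc2 e2]].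
  exists (shift (shift x i c1) j c2). split.
  - apply dist_shift2; auto; rewrite Rabs_pos_eq; lra.
  - rewrite (shift_comm x i j h h).
    replace (f (shift (shift x j h) i h) - f (shift x i h) - f (shift x j h) + f x)
      with ((f (shift (shift x j h) i h) - f (shift x i h)) - (f (shift x j h) - f x)) by ring.
    rewrite e1. rewrite (shift_comm x j i h c1). rewrite e2. ring.
Qed.

Lemma schwarz (f : R3 -> R) : Ck 2 f ->
  forall i j, (i<3)%nat -> (j<3)%nat -> forall x, pd j (pd i f) x = pd i (pd j f) x.
Proof.
  intros hf i j hi hj x.
  destruct (Nat.eq_dec i j) as [e|ne]; [subst; reflexivity|].
  assert (d1 : forall z, has_partial f i z (pd i f z)) by (intro z; apply (Ck_ex 1); auto).
  assert (d2 : forall z, has_partial f j z (pd j f z)) by (intro z; apply (Ck_ex 1); auto).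
  assert (d12 : forall z, has_partial (pd i f) j z (pd j (pd i f) z))
    by (intro z; apply (Ck_ex 0); auto; apply Ck_pd; auto).
  assert (d21 : forall z, has_partial (pd j f) i z (pd i (pd j f) z))
    by (intro z; apply (Ck_ex 0); auto; apply Ck_pd; auto).
  assert (c12 : cont3 (pd j (pd i f))) by (apply (Ck_cont 0); apply Ck_pd; auto; apply Ck_pd; auto).
  assert (c21 : cont3 (pd i (pd j f))) by (apply (Ck_cont 0); apply Ck_pd; auto; apply Ck_pd; auto).
  apply eq_of_close. intros eps he.
  destruct (c12 x (eps/2) ltac:(lra)) as [del1 [hd1 k1]].
  destruct (c21 x (eps/2) ltac:(lra)) as [del2 [hd2 k2]].
  set (h := Rmin del1 del2 / 2).
  assert (hh : 0 < h) by (unfold h; pose proof (Rmin_glb_lt _ _ _ hd1 hd2); lra).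
  assert (hh1 : h < del1) by (unfold h; pose proof (Rmin_l del1 del2); pose proof (Rmin_glb_lt _ _ _ hd1 hd2); lra).
  assert (hh2 : h < del2) by (unfold h; pose proof (Rmin_r del1 del2); pose proof (Rmin_glb_lt _ _ _ hd1 hd2); lra).
  destruct (delta_repr f i j x h hi hj ne hh d1 d12) as [p1 [dp1 e1]].
  destruct (delta_repr f j i x h hj hi (not_eq_sym ne) hh d2 d21) as [p2 [dp2 e2]].
  rewrite (shift_comm x j i h h) in e2.
  assert (e : pd j (pd i f) p1 = pd i (pd j f) p2).
  { assert (hh2' : 0 < h * h) by nra.
    apply (Rmult_eq_reg_r (h*h)); [|lra]. rewrite <- e1, <- e2. ring. }
  specialize (k1 p1 ltac:(lra)). specialize (k2 p2 ltac:(lra)).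
  rewrite e in k1.
  replace (pd j (pd i f) x - pd i (pd j f) x)
    with (- (pd i (pd j f) p2 - pd j (pd i f) x) + (pd i (pd j f) p2 - pd i (pd j f) x)) by ring.
  eapply Rle_lt_trans; [apply Rabs_triang|]. rewrite Rabs_Ropp. lra.
Qed.


Lemma hp_val (f : R3 -> R) i x a b : has_partial f i x a -> a = b -> has_partial f i x b.
Proof. intros h e. subst. exact h. Qed.

Definition bil (m n : nat -> nat -> R) : R :=
  (m 0%nat 0%nat * n 1%nat 1%nat + n 0%nat 0%nat * m 1%nat 1%nat
     - m 0%nat 1%nat * n 1%nat 0%nat - n 0%nat 1%nat * m 1%nat 0%nat) +
  (m 0%nat 0%nat * n 2%nat 2%nat + n 0%nat 0%nat * m 2%nat 2%nat
     - m 0%nat 2%nat * n 2%nat 0%nat - n 0%nat 2%nat * m 2%nat 0%nat) +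
  (m 1%nat 1%nat * n 2%nat 2%nat + n 1%nat 1%nat * m 2%nat 2%nat
     - m 1%nat 2%nat * n 2%nat 1%nat - n 1%nat 2%nat * m 2%nat 1%nat).

Ltac hp_tree hM :=
  repeat first [ apply hp_minus | apply hp_plus | apply hp_mult | (apply hM; lia) ].

Lemma hp_sig2 (M : nat -> nat -> R3 -> R) l y (A : nat -> nat -> R) :
  (forall i j, (i<3)%nat -> (j<3)%nat -> has_partial (M i j) l y (A i j)) ->
  has_partial (fun z => sig2 (fun i j => M i j z)) l y (bil (fun i j => M i j y) A).
Proof.
  intros hM. unfold sig2; cbv beta. eapply hp_val; [hp_tree hM|]. unfold bil. ring.
Qed.

Lemma hp_bil (M N : nat -> nat -> R3 -> R) l y (A B : nat -> nat -> R) :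
  (forall i j, (i<3)%nat -> (j<3)%nat -> has_partial (M i j) l y (A i j)) ->
  (forall i j, (i<3)%nat -> (j<3)%nat -> has_partial (N i j) l y (B i j)) ->
  has_partial (fun z => bil (fun i j => M i j z) (fun i j => N i j z)) l y
     (bil A (fun i j => N i j y) + bil (fun i j => M i j y) B).
Proof.
  intros hM hN. unfold bil; cbv beta. eapply hp_val.
  - repeat first [ apply hp_minus | apply hp_plus | apply hp_mult | (apply hM; lia) | (apply hN; lia) ].
  - ring.
Qed.

Lemma eqd1 (u : R3 -> R) (Hreg : Ck 4 u) (Heq : forall x, sigma2 u x = 1) l y : (l < 3)%nat ->
  bil (fun i j => pd i (pd j u) y) (fun i j => pd l (pd i (pd j u)) y) = 0.
Proof.
  intros hl.
  assert (h1 : has_partial (fun z => sig2 (fun i j => pd i (pd j u) z)) l y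
     (bil (fun i j => pd i (pd j u) y) (fun i j => pd l (pd i (pd j u)) y))).
  { apply hp_sig2. intros i j hi hj. apply (Ck_ex 1); auto.
    apply Ck_pd; auto. apply Ck_pd; auto. }
  assert (ef : (fun z => sig2 (fun i j => pd i (pd j u) z)) = (fun _ => 1)).
  { apply functional_extensionality. intro z. rewrite <- (Heq z). reflexivity. }
  rewrite ef in h1. pose proof (hp_const 1 l y) as h2.
  apply pd_unique in h1. apply pd_unique in h2. congruence.
Qed.

Lemma eqd2 (u : R3 -> R) (Hreg : Ck 4 u) (Heq : forall x, sigma2 u x = 1) l x : (l < 3)%nat ->
  bil (fun i j => pd l (pd i (pd j u)) x) (fun i j => pd l (pd i (pd j u)) x)
  + bil (fun i j => pd i (pd j u) x) (fun i j => pd l (pd l (pd i (pd j u))) x) = 0.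
Proof.
  intros hl.
  assert (h1 : has_partial (fun z => bil (fun i j => pd i (pd j u) z) (fun i j => pd l (pd i (pd j u)) z)) l x
     (bil (fun i j => pd l (pd i (pd j u)) x) (fun i j => pd l (pd i (pd j u)) x)
      + bil (fun i j => pd i (pd j u) x) (fun i j => pd l (pd l (pd i (pd j u))) x))).
  { apply (hp_bil (fun i j => pd i (pd j u)) (fun i j => pd l (pd i (pd j u)))).
    - intros i j hi hj. apply (Ck_ex 1); auto. apply Ck_pd; auto. apply Ck_pd; auto.
    - intros i j hi hj. apply (Ck_ex 0); auto. apply Ck_pd; auto. apply Ck_pd; auto. apply Ck_pd; auto. }
  assert (ef : (fun z => bil (fun i j => pd i (pd j u) z) (fun i j => pd l (pd i (pd j u)) z)) = (fun _ => 0)).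
  { apply functional_extensionality. intro z. apply eqd1; auto. }
  rewrite ef in h1. pose proof (hp_const 0 l x) as h2.
  apply pd_unique in h1. apply pd_unique in h2. congruence.
Qed.

Lemma sym2 (u : R3 -> R) (Hreg : Ck 4 u) i j : (i<3)%nat -> (j<3)%nat ->
  pd i (pd j u) = pd j (pd i u).
Proof.
  intros hi hj. apply functional_extensionality. intro y.
  apply (schwarz u); auto. apply Ck_mono, Ck_mono. exact Hreg.
Qed.

Lemma sym3 (u : R3 -> R) (Hreg : Ck 4 u) i j k : (i<3)%nat -> (j<3)%nat -> (k<3)%nat ->
  pd i (pd j (pd k u)) = pd j (pd i (pd k u)).
Proof.
  intros hi hj hk. apply functional_extensionality. intro y.
  apply (schwarz (pd k u)); auto. apply Ck_mono. apply Ck_pd; auto.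
Qed.

Lemma sym4 (u : R3 -> R) (Hreg : Ck 4 u) i j l : (i<3)%nat -> (j<3)%nat -> (l<3)%nat ->
  pd l (pd l (pd i (pd j u))) = pd i (pd j (pd l (pd l u))).
Proof.
  intros hi hj hl.
  rewrite (sym3 u Hreg l i j) by auto.
  assert (e : pd l (pd i (pd l (pd j u))) = pd i (pd l (pd l (pd j u)))).
  { apply functional_extensionality. intro y. apply (schwarz (pd l (pd j u))); auto.
    apply Ck_pd; auto. apply Ck_pd; auto. }
  rewrite e. rewrite (sym2 u Hreg l j) by auto.
  rewrite (sym3 u Hreg l j l) by auto. reflexivity.
Qed.

Lemma dL (u : R3 -> R) (Hreg : Ck 4 u) i y : (i<3)%nat ->
  has_partial (lap u) i y (sum3 (fun k => pd i (pd k (pd k u)) y)).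
Proof.
  intros hi. unfold lap, sum3, hess.
  apply hp_plus; [apply hp_plus|];
  (apply (Ck_ex 1); [auto| apply Ck_pd; [lia| apply Ck_pd; [lia| exact Hreg]]]).
Qed.

Lemma dLfun (u : R3 -> R) (Hreg : Ck 4 u) i : (i<3)%nat ->
  pd i (lap u) = fun y => sum3 (fun k => pd i (pd k (pd k u)) y).
Proof.
  intros hi. apply functional_extensionality. intro y. apply pd_unique. apply dL; auto.
Qed.

Lemma d2L (u : R3 -> R) (Hreg : Ck 4 u) i j x : (i<3)%nat -> (j<3)%nat ->
  has_partial (pd j (lap u)) i x (sum3 (fun k => pd i (pd j (pd k (pd k u))) x)).
Proof.
  intros hi hj. rewrite (dLfun u Hreg j hj). unfold sum3.
  apply hp_plus; [apply hp_plus|];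
  (apply (Ck_ex 0); [auto| apply Ck_pd; [lia| apply Ck_pd; [lia| apply Ck_pd; [lia| exact Hreg]]]]).
Qed.


Ltac bnorm B Bs :=
  repeat match goal with
  | |- context [B ?l 1%nat 0%nat] => rewrite (Bs l 1%nat 0%nat) by lia
  | |- context [B ?l 2%nat 0%nat] => rewrite (Bs l 2%nat 0%nat) by lia
  | |- context [B ?l 2%nat 1%nat] => rewrite (Bs l 2%nat 1%nat) by lia
  end.

Lemma alg_final (H : nat -> nat -> R) (T B : nat -> nat -> nat -> R) (V : nat -> nat -> R) (Lx : R) :
  (forall i j, (i<3)%nat -> (j<3)%nat -> H i j = H j i) ->
  (forall i j k, (i<3)%nat -> (j<3)%nat -> (k<3)%nat -> T i j k = T j i k) ->
  (forall i j k, (i<3)%nat -> (j<3)%nat -> (k<3)%nat -> T i j k = T i k j) ->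
  (forall l i j, (l<3)%nat -> (i<3)%nat -> (j<3)%nat -> B l i j = B l j i) ->
  Lx = sum3 (fun i => H i i) -> 0 < Lx -> 0 < sig2 H ->
  (forall k, (k<3)%nat -> bil H (fun i j => T k i j) = 0) ->
  (forall l, (l<3)%nat -> bil (fun i j => T l i j) (fun i j => T l i j) + bil H (fun i j => B l i j) = 0) ->
  (forall i j, (i<3)%nat -> (j<3)%nat -> V i j = sum3 (fun l => B l i j)) ->
  sum3 (fun i => sum3 (fun j => (Lx * kron i j - H i j) *
      ((V i j * Lx - sum3 (fun k => T i k k) * sum3 (fun k => T j k k)) / Lx^2)))
  >= 1/25 * sum3 (fun i => sum3 (fun j => (Lx * kron i j - H i j) *
      (sum3 (fun k => T i k k) / Lx) * (sum3 (fun k => T j k k) / Lx))).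
Proof.
  intros Hs Ts12 Ts23 Bs eL hL h2 e1 e2 eV.
  assert (con : forall k, (k<3)%nat -> sum3 (fun i => sum3 (fun j =>
      (sum3 (fun l => H l l) * kron i j - H i j) * T i j k)) = 0).
  { intros k hk. rewrite <- (e1 k hk).
    destruct k as [|[|[|k]]]; try lia; unfold sum3, bil, kron; simpl;
    tnorm T Ts12 Ts23; rewrite (Hs 1%nat 0%nat), (Hs 2%nat 0%nat), (Hs 2%nat 1%nat) by lia; ring. }
  assert (hD : 0 < sum3 (fun i => H i i)) by (rewrite <- eL; exact hL).
  pose proof (alg_main H T Hs Ts12 Ts23 hD h2 con) as AM.
  rewrite <- eL in AM.
  assert (E : forall l, (l<3)%nat -> bil H (fun i j => B l i j) =
      sum3 (fun i => sum3 (fun j => (T l i j)^2)) - sum3 (fun k => (T l k k)) ^ 2).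
  { intros l hl. pose proof (e2 l hl) as e.
    enough (bil (fun i j => T l i j) (fun i j => T l i j) = (sum3 (fun k => T l k k))^2
       - sum3 (fun i => sum3 (fun j => (T l i j)^2))) by lra.
    unfold bil, sum3.
    rewrite (Ts23 l 1%nat 0%nat), (Ts23 l 2%nat 0%nat), (Ts23 l 2%nat 1%nat) by lia.
    ring. }
  assert (X : sum3 (fun i => sum3 (fun j => (Lx * kron i j - H i j) * V i j))
      = N3 T - sum3 (fun k => (sum3 (fun i => T i i k))^2)).
  { transitivity (sum3 (fun l => bil H (fun i j => B l i j))).
    - transitivity (sum3 (fun i => sum3 (fun j => (Lx * kron i j - H i j) * sum3 (fun l => B l i j)))).
      { apply sum3_ext_lt; intros i hi; apply sum3_ext_lt; intros j hj; rewrite eV by auto; reflexivity. }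
      rewrite eL. unfold bil, sum3, kron. simpl.
      bnorm B Bs. rewrite (Hs 1%nat 0%nat), (Hs 2%nat 0%nat), (Hs 2%nat 1%nat) by lia. ring.
    - unfold sum3 at 1. rewrite !E by lia. unfold N3, sum3. tnorm T Ts12 Ts23. ring. }
  set (SV := sum3 (fun i => sum3 (fun j => (Lx * kron i j - H i j) * V i j))) in *.
  set (Y := sum3 (fun i => sum3 (fun j => (Lx * kron i j - H i j) *
      sum3 (fun k => T i k k) * sum3 (fun k => T j k k)))).
  assert (eY : Y = sum3 (fun i => sum3 (fun j => (Lx * kron i j - H i j) *
          sum3 (fun l => T l l i) * sum3 (fun l => T l l j)))).
  { unfold Y, sum3. tnorm T Ts12 Ts23. ring. }
  rewrite <- eY, <- X in AM.
  assert (eq1 : sum3 (fun i => sum3 (fun j => (Lx * kron i j - H i j) *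
      ((V i j * Lx - sum3 (fun k => T i k k) * sum3 (fun k => T j k k)) / Lx^2)))
      = (Lx * SV - Y) / Lx^2).
  { unfold SV, Y, sum3. field. lra. }
  assert (eq2 : sum3 (fun i => sum3 (fun j => (Lx * kron i j - H i j) *
      (sum3 (fun k => T i k k) / Lx) * (sum3 (fun k => T j k k) / Lx))) = Y / Lx^2).
  { unfold Y, sum3. field. lra. }
  rewrite eq1, eq2.
  assert (q : 0 < / Lx^2) by (apply Rinv_0_lt_compat; apply pow_lt; lra).
  unfold Rdiv. assert (0 <= (Lx * SV - 26/25 * Y) * / Lx^2) by (apply Rmult_le_pos; lra).
  lra.
Qed.


Theorem lemma3p1 (u : R3 -> R)
  (Hreg : Ck 4 u)
  (Hconv : two_convex u)
  (Heq : forall x, sigma2 u x = 1) :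
  forall x : R3,
    let w := fun y => ln (lap u y) in
    sum3 (fun i => sum3 (fun j => sigma2_ij u x i j * pd i (pd j w) x))
    >= 1 / 25 *
       sum3 (fun i => sum3 (fun j => sigma2_ij u x i j * pd i w x * pd j w x)).
Proof.
  intros x w.
  assert (Lpos : forall y, 0 < lap u y) by (intro y; exact (proj1 (Hconv y))).
  assert (dw : forall j, (j<3)%nat -> pd j w = fun y => pd j (lap u) y / lap u y).
  { intros j hj. apply functional_extensionality. intro y. apply pd_unique.
    unfold w. apply hp_ln; [apply Lpos|]. apply pd_spec. eexists. apply dL; auto. }
  set (T := fun i j k => pd i (pd j (pd k u)) x).
  set (V := fun i j => sum3 (fun k => pd i (pd j (pd k (pd k u))) x)).
  set (B := fun l i j => pd l (pd l (pd i (pd j u))) x).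
  set (H := fun i j => pd i (pd j u) x).
  assert (Li : forall i, (i<3)%nat -> pd i (lap u) x = sum3 (fun k => T i k k)).
  { intros i hi. apply pd_unique. apply dL; auto. }
  assert (W2 : forall i j, (i<3)%nat -> (j<3)%nat -> pd i (pd j w) x =
      (V i j * lap u x - sum3 (fun k => T i k k) * sum3 (fun k => T j k k)) / (lap u x)^2).
  { intros i j hi hj. rewrite (dw j hj). apply pd_unique.
    rewrite <- (Li i), <- (Li j) by auto.
    apply (hp_div (pd j (lap u)) (lap u) i x).
    - pose proof (Lpos x). lra.
    - apply d2L; auto.
    - apply pd_spec. eexists. apply dL; auto. }
  assert (W1 : forall i, (i<3)%nat -> pd i w x = sum3 (fun k => T i k k) / lap u x).
  { intros i hi. rewrite (dw i hi). rewrite Li by auto. reflexivity. }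
  replace (sum3 (fun i => sum3 (fun j => sigma2_ij u x i j * pd i (pd j w) x)))
    with (sum3 (fun i => sum3 (fun j => (lap u x * kron i j - H i j) *
      ((V i j * lap u x - sum3 (fun k => T i k k) * sum3 (fun k => T j k k)) / (lap u x)^2)))).
  2: { apply sum3_ext_lt; intros i hi; apply sum3_ext_lt; intros j hj. rewrite W2 by auto. reflexivity. }
  replace (sum3 (fun i => sum3 (fun j => sigma2_ij u x i j * pd i w x * pd j w x)))
    with (sum3 (fun i => sum3 (fun j => (lap u x * kron i j - H i j) *
      (sum3 (fun k => T i k k) / lap u x) * (sum3 (fun k => T j k k) / lap u x)))).
  2: { apply sum3_ext_lt; intros i hi; apply sum3_ext_lt; intros j hj. rewrite !W1 by auto. reflexivity. }
  apply (alg_final H T B V (lap u x)).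
  - intros i j hi hj. unfold H. rewrite (sym2 u Hreg i j) by auto. reflexivity.
  - intros i j k hi hj hk. unfold T. rewrite (sym3 u Hreg i j k) by auto. reflexivity.
  - intros i j k hi hj hk. unfold T. rewrite (sym2 u Hreg j k) by auto. reflexivity.
  - intros l i j hl hi hj. unfold B. rewrite (sym2 u Hreg i j) by auto. reflexivity.
  - reflexivity.
  - apply Lpos.
  - replace (sig2 H) with (sigma2 u x) by reflexivity. rewrite Heq. lra.
  - intros k hk. apply (eqd1 u Hreg Heq k x hk).
  - intros l hl. apply (eqd2 u Hreg Heq l x hl).
  - intros i j hi hj. unfold V. apply sum3_ext_lt. intros l hl. unfold B.
    rewrite (sym4 u Hreg i j l) by auto. reflexivity.
Qed.
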